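(* Let $\mathcal R$ be a species of tree on $T_0=\{1,\dots,n\}$. (i) The $\mathbf Q$-vector space with basis $\{A(T):T\in\mathcal R\}$ is a commutative $\mathbf Q$-algebra consisting of symmetric, diagonalizable magic matrices of sum zero. (ii) The $\mathbf Q$-vector space with basis $\{I\}\cup\{A(T):T\in\mathcal R\}$ is a commutative $\mathbf Q$-algebra of symmetric, diagonalizable magic matrices. (In particular these families are linearly independent.)
   Context: A species of tree is a family $\mathcal R$ of subsets of $T_0$ containing $T_0$, each of cardinality $\ge 2$, any two of which are either disjoint or nested. For $T\subset T_0$ of cardinality $n(T)\ge2$, $A(T)=(\alpha_{i,j})$ is the $n\times n$ matrix with $\alpha_{i,j}=-1$ if $i\ne j$ and $\{i,j\}\subset T$, $\alpha_{i,i}=n(T)-1$ if $i\in T$, and $0$ otherwise. A matrix is magic if all its row and column sums are equal (its sum). $I$ is the identity. *)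

(* Defs.v *)
From mathcomp Require Import all_boot all_order all_algebra.
Set Implicit Arguments. Unset Strict Implicit. Unset Printing Implicit Defensive.
Import GRing.Theory.
Local Open Scope ring_scope.

(* A species of tree on T0 = 'I_n (i.e. {1,...,n} re-indexed from 0):
   contains T0, every member has cardinality >= 2, any two members are
   disjoint or nested. *)
Definition species_of_tree (n : nat) (R : {set {set 'I_n}}) : Prop :=
  [/\ [set: 'I_n] \in R,
      (forall T, T \in R -> 2 <= #|T|)%N &
      (forall T U, T \in R -> U \in R ->
         [disjoint T & U] \/ T \subset U \/ U \subset T)].

Definition Amx (n : nat) (T : {set 'I_n}) : 'M[rat]_n :=
  \matrix_(i < n, j < n)
    if (i \in T) && (j \in T) then
      (if i == j then (#|T|%:R - 1) else -1)
    else 0.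

Definition magic_sum (n : nat) (M : 'M[rat]_n) (s : rat) : Prop :=
  (forall i, \sum_(j < n) M i j = s) /\ (forall j, \sum_(i < n) M i j = s).

Definition magic (n : nat) (M : 'M[rat]_n) : Prop := exists s, magic_sum M s.

Definition comm_sym_diag_algebra (n : nat) (S : seq 'M[rat]_n) : Prop :=
  [/\ (forall M N, M \in <<S>>%VS -> N \in <<S>>%VS -> M *m N \in <<S>>%VS),
      (forall M N, M \in <<S>>%VS -> N \in <<S>>%VS -> M *m N = N *m M),
      (forall M, M \in <<S>>%VS -> M^T = M) &
      (forall M, M \in <<S>>%VS -> diagonalizable M)].

(* Main.v *)
Require Import Defs.
From mathcomp Require Import all_boot all_order all_algebra.
Set Implicit Arguments. Unset Strict Implicit. Unset Printing Implicit Defensive.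
Import Order.TTheory GRing.Theory Num.Theory.
Local Open Scope ring_scope.

Section Dec.
Variable n : nat.
Implicit Types T U : {set 'I_n}.

Definition dS T : 'M[rat]_n := diag_mx (\row_i (i \in T)%:R).
Definition eS T : 'cV[rat]_n := \col_i (i \in T)%:R.

Lemma Amx_dec T : Amx T = #|T|%:R *: dS T - eS T *m (eS T)^T.
Proof.
apply/matrixP => i j; rewrite !mxE big_ord1 !mxE.
case: (eqVneq i j) => [<-|ij].
  by case: (i \in T) => /=; rewrite ?mulr1n ?mulr1 ?mul0r ?mulr0n ?mulr0 ?subr0.
rewrite mulr0n mulr0 sub0r.
by case: (i \in T); case: (j \in T); rewrite /= ?mulr1 ?mul0r ?mulr0 ?oppr0.
Qed.

Lemma dSM T U : dS T *m dS U = dS (T :&: U).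
Proof.
rewrite /dS mulmx_diag; congr diag_mx; apply/rowP => i; rewrite !mxE inE.
by case: (i \in T); case: (i \in U); rewrite ?mulr1 ?mul0r.
Qed.

Lemma dSe T U : dS T *m eS U = eS (T :&: U).
Proof.
rewrite /dS mul_diag_mx; apply/matrixP => i j; rewrite !mxE inE.
by case: (i \in T); case: (i \in U); rewrite ?mulr1 ?mul0r.
Qed.

Lemma eSd T U : (eS T)^T *m dS U = (eS (T :&: U))^T.
Proof.
by rewrite -[dS U]tr_diag_mx -trmx_mul dSe setIC.
Qed.

Lemma sum_ind (A : {set 'I_n}) : \sum_k ((k \in A)%:R : rat) = #|A|%:R.
Proof.
rewrite (eq_bigr (fun k => if k \in A then 1 else 0)); last by move=> k _; case: (k \in A).
by rewrite -big_mkcond sumr_const.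
Qed.

Lemma eSe T U : (eS T)^T *m eS U = (#|T :&: U|%:R)%:M.
Proof.
apply/matrixP => i j; rewrite !ord1 !mxE /= mulr1n -sum_ind.
by apply: eq_bigr => k _; rewrite !mxE inE; case: (k \in T); case: (k \in U); rewrite ?mulr1 ?mul0r.
Qed.

Lemma dS0 : dS set0 = 0.
Proof. by apply/matrixP => i j; rewrite !mxE inE mul0rn. Qed.
Lemma eS0 : eS set0 = 0.
Proof. by apply/matrixP => i j; rewrite !mxE inE. Qed.

Lemma AmxM_gen T U : Amx T *m Amx U =
  (#|T|%:R * #|U|%:R) *: dS (T :&: U) - #|T|%:R *: (eS (T :&: U) *m (eS U)^T)
  - #|U|%:R *: (eS T *m (eS (T :&: U))^T) + #|T :&: U|%:R *: (eS T *m (eS U)^T).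
Proof.
rewrite !Amx_dec mulmxBl !mulmxBr -!scalemxAl -!scalemxAr !scalerA dSM.
rewrite !mulmxA dSe -!(mulmxA (eS T)) eSd eSe mul_scalar_mx -scalemxAr.
by rewrite opprB addrA addrAC.
Qed.

Lemma AmxM_sub T U : T \subset U -> Amx T *m Amx U = #|U|%:R *: Amx T.
Proof.
move=> /setIidPl H; rewrite AmxM_gen H Amx_dec scalerBr scalerA [_ * _]mulrC.
by rewrite addrAC subrK.
Qed.

Lemma AmxM_sup T U : U \subset T -> Amx T *m Amx U = #|T|%:R *: Amx U.
Proof.
move=> /setIidPr H; rewrite AmxM_gen H Amx_dec scalerBr scalerA.
by rewrite subrK.
Qed.

Lemma AmxM_dis T U : [disjoint T & U] -> Amx T *m Amx U = 0.
Proof.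
rewrite -setI_eq0 => /eqP H; rewrite AmxM_gen H dS0 eS0 trmx0 cards0 mul0mx mulmx0 !scaler0.
by rewrite subrr subr0 scale0r addr0.
Qed.

Lemma Amx_sym T : (Amx T)^T = Amx T.
Proof.
apply/matrixP => i j; rewrite !mxE andbC; case: (_ && _) => //.
by rewrite eq_sym.
Qed.

Definition ones : 'cV[rat]_n := const_mx 1.
Lemma ones_eS : ones = eS setT.
Proof. by apply/matrixP => i j; rewrite !mxE inE. Qed.

Lemma Amx_ones T : Amx T *m ones = 0.
Proof.
rewrite ones_eS Amx_dec mulmxBl -scalemxAl dSe -mulmxA eSe mul_mx_scalar setIT.
by rewrite subrr.
Qed.

End Dec.

Lemma Amx_offdiag n (T : {set 'I_n}) x y : x != y ->
  Amx T x y = if (x \in T) && (y \in T) then -1 else 0.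
Proof. by move=> xy; rewrite mxE (negbTE xy); case: (_ && _). Qed.

Lemma Amx_free n m (T : 'I_m -> {set 'I_n}) (k : 'I_m -> rat) :
  injective T -> (forall i, (2 <= #|T i|)%N) ->
  (forall i j, [disjoint T i & T j] \/ T i \subset T j \/ T j \subset T i) ->
  \sum_i k i *: Amx (T i) = 0 -> forall i, k i = 0.
Proof.
move=> Tinj T2 lam Hs i0; apply/eqP; apply/negPn/negP => ki0.
set f := fun x y => \sum_j (if (x \in T j) && (y \in T j) then k j else 0).
have f0 x y : x != y -> f x y = 0.
  move=> xy; have := congr1 (fun M : 'M_n => M x y) Hs; rewrite summxE mxE /= => H.
  apply: oppr_inj; rewrite oppr0 -{}H /f -sumrN; apply: eq_bigr => j _.
  by rewrite !mxE (negbTE xy); case: (_ && _); rewrite ?mulrN1 ?mulr0 ?oppr0.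
case: (@arg_minnP _ _ (fun i => k i != 0) (fun i => #|T i|) ki0) => t kt tmin.
set T0 := T t.
have F1 j a : k j != 0 -> a \in T0 -> a \in T j -> T0 \subset T j.
  move=> kj aT0 aTj; case: (lam t j) => [dis|[//|sub]].
    by rewrite (disjointFr dis aT0) in aTj.
  have := geq_leqif (subset_leqif_cards sub); rewrite (tmin j kj) => /esym/eqP ->.
  by [].
have [a [b [aT0 bT0 ab]]] : exists a b, [/\ a \in T0, b \in T0 & a != b].
  by apply/card_gt1P; apply: T2.
have fab : f a b = k t + \sum_(j | j != t) (if T0 \subset T j then k j else 0).
  rewrite /f (bigD1 t) //= -/T0 aT0 bT0 /=; congr (_ + _).
  apply: eq_bigr => j _; case: (eqVneq (k j) 0) => [->|kj]; first by case: ifP; case: ifP.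
  case: (boolP (T0 \subset T j)) => [sub|nsub].
    by rewrite !(subsetP sub).
  case: ifP => // /andP[aTj _]; by rewrite (F1 j a kj aT0 aTj) in nsub.
suff rest : \sum_(j | j != t) (if T0 \subset T j then k j else 0) = 0.
  by move: (f0 a b ab); rewrite fab rest addr0 => kt0; rewrite kt0 eqxx in kt.
have pr j : j != t -> (T0 \subset T j) = (T0 \proper T j).
  by move=> jt; rewrite properEneq eq_sym (inj_eq Tinj) jt.
case: (pickP (fun u => (k u != 0) && (T0 \proper T u))) => [u0 /andP[ku0 pu0] | none].
  have Pu0 : (fun u => (k u != 0) && (T0 \proper T u)) u0 by rewrite ku0.
  case: (@arg_minnP _ _ (fun u => (k u != 0) && (T0 \proper T u)) (fun i => #|T i|) Pu0) => u /andP[ku pu] umin.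
  have [c cTu cT0] : exists2 c, c \in T u & c \notin T0.
    by case/properP: pu => _ [c ? ?]; exists c.
  have ac : a != c by apply: contraNneq cT0 => <-.
  apply: (etrans _ (f0 a c ac)); symmetry.
  rewrite /f (bigD1 t) //= -/T0 (negbTE cT0) andbF add0r.
  apply: eq_bigr => j jt; rewrite (pr j jt).
  case: (eqVneq (k j) 0) => [->|kj]; first by case: ifP; case: ifP.
  case: (boolP (T0 \proper T j)) => [pj|npj].
    have aTj : a \in T j by apply: (subsetP (proper_sub pj)).
    rewrite aTj /=; case: (lam u j) => [dis|[sub|sub]].
    - by rewrite (disjointFr dis (subsetP (proper_sub pu) a aT0)) in aTj.
    - by rewrite (subsetP sub).
    - have := geq_leqif (subset_leqif_cards sub).
      have -> : (#|T u| <= #|T j|)%N by apply: umin; rewrite kj pj.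
      by move=> /esym/eqP ->; rewrite cTu.
  case: ifP => // /andP[aTj cTj].
  have sub := F1 j a kj aT0 aTj.
  rewrite properEneq sub andbT negbK in npj; move/eqP: npj => Tj.
  by rewrite -Tj (negbTE cT0) in cTj.
rewrite big1 // => j jt; rewrite (pr j jt).
case: ifP => // pj; apply/eqP; apply/negPn/negP => kj.
by have := none j; rewrite kj pj.
Qed.

Lemma span_ind n (P : 'M[rat]_n -> Prop) (s : seq 'M[rat]_n) :
  P 0 -> (forall a M N, P M -> P N -> P (a *: M + N)) ->
  (forall x, x \in s -> P x) -> forall M, M \in <<s>>%VS -> P M.
Proof.
move=> P0 Pc Ps M HM; rewrite (@coord_span _ _ _ (in_tuple s) M HM).
apply: big_ind => //.
  by move=> x y Px Py; rewrite -[x]scale1r; apply: Pc.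
move=> i _; rewrite -[_ *: _]addr0; apply: Pc => //; apply: Ps.
by apply: mem_nth.
Qed.

Lemma span_mul_closed n (s : seq 'M[rat]_n) :
  (forall x y, x \in s -> y \in s -> x *m y \in <<s>>%VS) ->
  forall M N, M \in <<s>>%VS -> N \in <<s>>%VS -> M *m N \in <<s>>%VS.
Proof.
move=> H M N HM HN; move: M HM; apply: (span_ind (P := fun M => M *m N \in <<s>>%VS)).
- by rewrite mul0mx mem0v.
- by move=> a M1 M2 H1 H2; rewrite mulmxDl -scalemxAl memvD ?memvZ.
move=> x xs; move: N HN; apply: (span_ind (P := fun N => x *m N \in <<s>>%VS)).
- by rewrite mulmx0 mem0v.
- by move=> a M1 M2 H1 H2; rewrite mulmxDr -scalemxAr memvD ?memvZ.
by move=> y ys; apply: H.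
Qed.

Lemma span_sym n (s : seq 'M[rat]_n) :
  (forall x, x \in s -> x^T = x) -> forall M, M \in <<s>>%VS -> M^T = M.
Proof.
move=> H; apply: span_ind => //; first by rewrite trmx0.
by move=> a M N HM HN; rewrite linearD linearZ /= HM HN.
Qed.

Lemma span_diag n (s : seq 'M[rat]_n.+1) :
  (forall x y, x \in s -> y \in s -> x *m y = y *m x) ->
  (forall x, x \in s -> diagonalizable x) ->
  forall M, M \in <<s>>%VS -> diagonalizable M.
Proof.
move=> Hc Hd.
have [P Pu /allP Hall] := (codiagonalizableP s).1 (conj Hc Hd).
move=> M HM; exists P => //; move: M HM.
apply: (span_ind (P := fun M => is_diag_mx (conjmx P M))).
- by rewrite conjmx0 mx0_is_diag.
- move=> a M N /is_diag_mxP HM /is_diag_mxP HN; apply/is_diag_mxP => i j ij.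
  have -> : conjmx P (a *: M + N) = a *: conjmx P M + conjmx P N.
    by rewrite /conjmx mulmxDr mulmxDl -scalemxAr -scalemxAl.
  by rewrite mxE [X in X + _]mxE HM // HN // mulr0 addr0.
by move=> x xs; have := Hall x xs.
Qed.

Lemma Amx_diag n (T : {set 'I_n.+1}) : (0 < #|T|)%N -> diagonalizable (Amx T).
Proof.
move=> T0; apply/diagonalizableP; exists [:: 0; #|T|%:R].
  by rewrite /= inE andbT eq_sym pnatr_eq0 -lt0n T0.
apply: mxminpoly_min; rewrite !big_cons big_nil mulr1 rmorphM !rmorphB /=.
rewrite horner_mx_X !horner_mx_C raddf0 subr0 mulrBr -!mulmxE AmxM_sub // mul_mx_scalar.
by rewrite subrr.
Qed.

Lemma span_ones0 n (s : seq 'M[rat]_n) (R : {set {set 'I_n}}) :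
  s = [seq Amx T | T <- enum R] ->
  forall M, M \in <<s>>%VS -> M *m ones n = 0.
Proof.
move=> ->; apply: span_ind; first by rewrite mul0mx.
  by move=> a M N HM HN; rewrite mulmxDl -scalemxAl HM HN scaler0 addr0.
by move=> x /mapP[T _ ->]; apply: Amx_ones.
Qed.

Lemma magic_of n (M : 'M[rat]_n) c :
  M^T = M -> M *m ones n = c *: ones n -> magic_sum M c.
Proof.
move=> sym H.
have row i : \sum_j M i j = c.
  have := congr1 (fun X : 'cV_n => X i ord0) H; rewrite !mxE mulr1 => <-.
  by apply: eq_bigr => j _; rewrite mxE mulr1.
split => // j; rewrite -(row j); apply: eq_bigr => i _.
by have := congr1 (fun X : 'M_n => X i j) sym; rewrite mxE.
Qed.
Unset Implicit Arguments.

Theorem mainTheorem7 (n : nat) (R : {set {set 'I_n}}) :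
  species_of_tree R ->
  let S := [seq Amx T | T <- enum R] in
  (* (i) *)
  (free S /\ comm_sym_diag_algebra S /\
   (forall M, M \in <<S>>%VS -> magic_sum M 0)) /\
  (* (ii) *)
  (free (1%:M :: S) /\ comm_sym_diag_algebra (1%:M :: S) /\
   (forall M, M \in <<1%:M :: S>>%VS -> magic M)).
Proof.
case: n R => [|n] R [RT R2 Rlam] S.
  by have := R2 _ RT; rewrite cardsT card_ord.
have Smem x : x \in S -> exists2 T, T \in R & x = Amx T.
  by move=> /mapP[T TR ->]; exists T => //; rewrite -mem_enum.
set Sp := 1%:M :: S.
have SSp : forall x, x \in S -> x \in Sp by move=> x xS; rewrite inE xS orbT.
have spanS : forall M, M \in <<S>>%VS -> M \in <<Sp>>%VS.
  by move=> M; apply/subvP/sub_span.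
have prodAA T U : T \in R -> U \in R -> Amx T *m Amx U \in <<S>>%VS.
  move=> TR UR; have AT : Amx T \in <<S>>%VS by rewrite memv_span // map_f // mem_enum.
  have AU : Amx U \in <<S>>%VS by rewrite memv_span // map_f // mem_enum.
  case: (Rlam T U TR UR) => [dis|[sub|sub]].
  - by rewrite AmxM_dis // mem0v.
  - by rewrite AmxM_sub // memvZ.
  - by rewrite AmxM_sup // memvZ.
have closS := span_mul_closed (s := S) ltac:(by move=> x y /Smem[T TR ->] /Smem[U UR ->]; apply: prodAA).
have closSp : forall M N, M \in <<Sp>>%VS -> N \in <<Sp>>%VS -> M *m N \in <<Sp>>%VS.
  apply: span_mul_closed => x y xin yin; move: xin yin; rewrite !inE => /predU1P[-> yin|xS /predU1P[->|yS]].
  - by rewrite mul1mx memv_span // inE.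
  - by rewrite mulmx1 memv_span // SSp.
  - by apply: spanS; case/Smem: xS => T TR ->; case/Smem: yS => U UR ->; apply: prodAA.
have symS := span_sym (s := S) ltac:(by move=> x /Smem[T _ ->]; apply: Amx_sym).
have symSp : forall M, M \in <<Sp>>%VS -> M^T = M.
  apply: span_sym => x; rewrite inE => /predU1P[->|/Smem[T _ ->]].
    by rewrite trmx1.
  by apply: Amx_sym.
have comm (s : seq 'M[rat]_n.+1) : (forall M N, M \in <<s>>%VS -> N \in <<s>>%VS -> M *m N \in <<s>>%VS) ->
    (forall M, M \in <<s>>%VS -> M^T = M) ->
    forall M N, M \in <<s>>%VS -> N \in <<s>>%VS -> M *m N = N *m M.
  move=> cl sy M N HM HN; rewrite -(sy _ (cl _ _ HM HN)) trmx_mul.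
  by rewrite (sy _ HM) (sy _ HN).
have commS := comm S closS symS.
have commSp := comm Sp closSp symSp.
have diagSp : forall M, M \in <<Sp>>%VS -> diagonalizable M.
  apply: span_diag.
    by move=> x y xs ys; apply: commSp; apply: memv_span.
  move=> x; rewrite inE => /predU1P[->|/Smem[T TR ->]].
    exact: diagonalizable_scalar.
  by apply: Amx_diag; apply: leq_trans (R2 T TR).
have ones0 := span_ones0 (erefl S).
have onesSp : forall M, M \in <<Sp>>%VS -> exists c, M *m ones n.+1 = c *: ones n.+1.
  apply: span_ind.
  - by exists 0; rewrite mul0mx scale0r.
  - move=> a M N [c Hc] [d Hd]; exists (a * c + d).
    by rewrite mulmxDl -scalemxAl Hc Hd scalerA scalerDl.
  move=> x; rewrite inE => /predU1P[->|xS].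
    by exists 1; rewrite mul1mx scale1r.
  by exists 0; rewrite scale0r; apply: ones0; apply: memv_span.
have freeS : free S.
  apply/(freeP (X := in_tuple S)) => k Hk i.
  pose T (j : 'I_(size S)) := nth set0 (enum R) j.
  have lt (j : 'I_(size S)) : (j < size (enum R))%N by rewrite -(size_map (@Amx n.+1)) ltn_ord.
  have TR j : T j \in R by rewrite -mem_enum mem_nth.
  apply: (Amx_free (T := T)).
  - move=> j1 j2 /eqP; rewrite nth_uniq ?enum_uniq ?lt // => /eqP; apply: val_inj.
  - by move=> j; apply: R2.
  - by move=> j1 j2; apply: Rlam.
  apply: (etrans _ Hk); apply: eq_bigr => j _; congr (_ *: _).
  by rewrite /= /S (nth_map set0) ?lt.
have one_notin : 1%:M \notin <<S>>%VS.
  apply/negP => /ones0; rewrite mul1mx => /matrixP /(_ ord0 ord0).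
  by rewrite !mxE.
split; split.
- exact: freeS.
- split; last by move=> M HM; apply: magic_of; rewrite ?symS ?ones0 ?scale0r.
  split; [exact: closS | exact: commS | exact: symS | ].
  move=> M HM; apply: (span_diag _ _ HM).
    by move=> x y xs ys; apply: commS; apply: memv_span.
  by move=> x /Smem[T TR ->]; apply: Amx_diag; apply: leq_trans (R2 T TR).
- by rewrite free_cons one_notin freeS.
split; first by split; [exact: closSp | exact: commSp | exact: symSp | exact: diagSp].
move=> M HM; have [c Hc] := onesSp M HM; exists c; apply: magic_of => //.
exact: symSp.
Qed.
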